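(* Let $f(u)=e^{g(u)}$ where $g\in C^3[0,\infty)$ satisfies $g'>0$, $g''>0$, $g'^2-g''\ge0$, $2g''^2-g'g'''>0$ on $[0,\infty)$. Then $\frac{h''(y)}{h'(y)}\le4$ for $y\ge-\log F(0)$.
   Context: $F(u)=\int_u^\infty\frac{ds}{f(s)}$, $\eta(y)=F^{-1}(e^{-y})$ for $y\ge-\log F(0)$ (with $F^{-1}$ the inverse of the decreasing function $F$), and $h(y)=1-f'(\eta(y))F(\eta(y))$. Under the hypotheses $h'(y)<0$ for $y\ge -\log F(0)$. *)

(* Defs.v *)
From Stdlib Require Import Reals.
From Coquelicot Require Import Coquelicot.
Open Scope R_scope.

(* [has_deriv_from a f f'] : on the closed half-line [a, +oo), f' is the derivative
   of f relative to [a, +oo): for every x >= a,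
   (f t - f x)/(t - x) -> f' x as t -> x with t >= a, t <> x.
   At interior points this is the ordinary derivative; at x = a it is the
   right derivative (as is standard for C^k[a,oo)). *)
Definition has_deriv_from (a : R) (f f' : R -> R) : Prop :=
  forall x, a <= x ->
    filterlim (fun t => (f t - f x) / (t - x))
      (within (fun t => a <= t /\ t <> x) (locally x)) (locally (f' x)).

Definition cont_from (a : R) (f : R -> R) : Prop :=
  forall x, a <= x ->
    filterlim f (within (fun t => a <= t) (locally x)) (locally (f x)).

Definition f_of (g : R -> R) (u : R) : R := exp (g u).

Definition F_of (g : R -> R) (u : R) : R :=
  RInt_gen (fun s => / f_of g s) (at_point u) (Rbar_locally p_infty).

(* Main.v *)
Require Import Defs.
From Stdlib Require Import Reals Lra Psatz.
From Coquelicot Require Import Coquelicot.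
Open Scope R_scope.

Lemma locR (x : R) (P : R -> Prop) :
  locally x P <-> exists e, 0 < e /\ forall y, Rabs (y - x) < e -> P y.
Proof.
  split.
  - intros [eps He]. exists eps. split. apply cond_pos. intros y Hy. apply He. exact Hy.
  - intros [e [He H]]. exists (mkposreal e He). intros y Hy. apply H. exact Hy.
Qed.

Lemma lim_mult {T} (F : (T -> Prop) -> Prop) {FF : Filter F} (f g : T -> R) a b :
  filterlim f F (locally a) -> filterlim g F (locally b) ->
  filterlim (fun t => f t * g t) F (locally (a * b)).
Proof. intros Hf Hg. exact (filterlim_comp_2 _ _ (fun x y => mult x y) Hf Hg (filterlim_mult a b)). Qed.

Lemma lim_plus {T} (F : (T -> Prop) -> Prop) {FF : Filter F} (f g : T -> R) a b :
  filterlim f F (locally a) -> filterlim g F (locally b) ->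
  filterlim (fun t => f t + g t) F (locally (a + b)).
Proof. intros Hf Hg. exact (filterlim_comp_2 _ _ (fun x y => plus x y) Hf Hg (filterlim_plus a b)). Qed.

Definition W (a x : R) := within (fun t => a <= t) (locally x).
Definition Wn (a x : R) := within (fun t => a <= t /\ t <> x) (locally x).

Lemma Wn_proper a x : a <= x -> ProperFilter' (Wn a x).
Proof.
  intros Hax. constructor.
  - unfold Wn, within. intros H. apply locR in H. destruct H as [e [He H]].
    apply (H (x + e/2)). rewrite Rabs_right; lra. lra.
  - apply within_filter. apply locally_filter.
Qed.

Lemma Wgt_proper x : ProperFilter' (within (fun t => x < t) (locally x)).
Proof.
  constructor.
  - unfold within. intros H. apply locR in H. destruct H as [e [He H]].
    apply (H (x + e/2)). rewrite Rabs_right; lra. lra.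
  - apply within_filter. apply locally_filter.
Qed.

Lemma W_Wn a x P : W a x P -> Wn a x P.
Proof. unfold W, Wn, within. apply filter_imp. intros t H [H1 H2]. auto. Qed.

Definition cd (a : R) (f : R -> R) (d x : R) : Prop :=
  exists psi, (forall t, a <= t -> f t - f x = psi t * (t - x)) /\
              filterlim psi (W a x) (locally d).

Lemma hdf_cd a f f' x : has_deriv_from a f f' -> a <= x -> cd a f (f' x) x.
Proof.
  intros H Hx. specialize (H x Hx).
  exists (fun t => match Req_dec_T t x with left _ => f' x | right _ => (f t - f x) / (t - x) end).
  split.
  - intros t Ht. destruct (Req_dec_T t x). subst. ring. field. lra.
  - intros P HP. specialize (H P HP). unfold W, within.
    unfold within in H. apply locR in H. apply locR. destruct H as [e [He H]].
    exists e. split. exact He. intros y Hy Ha. destruct (Req_dec_T y x).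
    + subst. apply locally_singleton. exact HP.
    + apply H; auto.
Qed.

Lemma cd_unique a f f' x d : has_deriv_from a f f' -> a <= x -> cd a f d x -> f' x = d.
Proof.
  intros H Hx [psi [H1 H2]]. specialize (H x Hx).
  assert (PF := Wn_proper a x Hx).
  apply (filterlim_locally_unique (F := Wn a x) (fun t => (f t - f x) / (t - x))); [exact H|].
  apply filterlim_ext_loc with psi.
  - unfold Wn, within. apply filter_forall. intros t [Ht Hne]. rewrite H1 by auto. field. lra.
  - intros P HP. apply W_Wn. apply H2. exact HP.
Qed.

Lemma cd_cont a f d x : cd a f d x -> filterlim f (W a x) (locally (f x)).
Proof.
  intros [psi [H1 H2]].
  apply filterlim_ext_loc with (fun t => f x + psi t * (t - x)).
  - unfold W, within. apply filter_forall. intros t Ht. rewrite <- H1 by auto. ring.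
  - assert (Hl : filterlim (fun t => f x + psi t * (t - x)) (W a x) (locally (f x + d * (x - x)))).
    { apply lim_plus. apply within_filter, locally_filter. apply filterlim_const.
      apply lim_mult. apply within_filter, locally_filter. exact H2.
      apply lim_plus. apply within_filter, locally_filter.
      apply (filterlim_filter_le_1 (F := locally x)). apply filter_le_within. apply filterlim_id.
      apply filterlim_const. }
    replace (f x + d * (x - x)) with (f x) in Hl by ring. exact Hl.
Qed.
Lemma ballR x e y : ball x e y <-> Rabs (y - x) < e.
Proof. reflexivity. Qed.

Lemma limW_eps a x psi d : filterlim psi (W a x) (locally d) ->
  forall e, 0 < e -> exists del, 0 < del /\ forall t, a <= t -> Rabs (t - x) < del -> Rabs (psi t - d) < e.
Proof.
  intros H e He. assert (Hb : locally d (fun z => Rabs (z - d) < e)).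
  { apply locR. exists e. split; auto. }
  specialize (H _ Hb). unfold W, within in H. simpl in H. apply locR in H.
  destruct H as [del [Hd H]]. exists del. split; auto.
Qed.

Lemma cara phi y l : derivable_pt_lim phi y l ->
  exists chi, (forall z, phi z - phi y = chi z * (z - y)) /\ filterlim chi (locally y) (locally l).
Proof.
  intros H.
  exists (fun z => match Req_dec_T z y with left _ => l | right _ => (phi z - phi y) / (z - y) end).
  split.
  - intros z. destruct (Req_dec_T z y). subst. ring. field. lra.
  - intros P HP. apply locR in HP. destruct HP as [e [He HP]].
    destruct (H e He) as [del Hdel]. apply locR. exists del. split. apply cond_pos.
    intros z Hz. apply HP. destruct (Req_dec_T z y).
    + rewrite Rminus_eq_0, Rabs_R0. exact He.
    + specialize (Hdel (z - y)). replace (y + (z - y)) with z in Hdel by ring.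
      apply Hdel; auto. lra.
Qed.

Lemma cd_of_dpl a f x l : derivable_pt_lim f x l -> cd a f l x.
Proof.
  intros H. destruct (cara f x l H) as [chi [H1 H2]]. exists chi. split.
  intros t _. apply H1. intros P HP. unfold W. apply filter_le_within. apply H2. exact HP.
Qed.

Lemma cd_interior a f d x : a < x -> cd a f d x -> derivable_pt_lim f x d.
Proof.
  intros Hax [psi [H1 H2]] e He.
  destruct (limW_eps a x psi d H2 e He) as [del [Hd H]].
  assert (Hm : 0 < Rmin del (x - a)) by (apply Rmin_pos; lra).
  exists (mkposreal _ Hm). intros h Hh0 Hh. simpl in Hh.
  assert (Hh1 := Rmin_l del (x - a)). assert (Hh2 := Rmin_r del (x - a)).
  assert (Hha : a <= x + h). { assert (Rabs h < x - a) by lra. apply Rabs_def2 in H0. lra. }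
  rewrite H1 by auto. replace (psi (x + h) * (x + h - x) / h) with (psi (x + h)) by (field; auto).
  apply H; auto. replace (x + h - x) with h by ring. lra.
Qed.

Lemma cd_restrict a a' f d x : a <= a' -> a' <= x -> cd a f d x -> cd a' f d x.
Proof.
  intros H1 H2 [psi [Hp1 Hp2]]. exists psi. split.
  intros t Ht. apply Hp1. lra.
  intros P HP. specialize (Hp2 P HP). unfold filtermap, W, within in *. revert Hp2. apply filter_imp.
  intros t Ht Ht'. apply Ht. lra.
Qed.

Lemma Wfilter a x : Filter (W a x).
Proof. apply within_filter, locally_filter. Qed.
#[local] Hint Resolve Wfilter : core.

Lemma limW_id a x : filterlim (fun t => t) (W a x) (locally x).
Proof. apply (filterlim_filter_le_1 (F := locally x)). apply filter_le_within. apply filterlim_id. Qed.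

Lemma cd_const a c x : cd a (fun _ => c) 0 x.
Proof. exists (fun _ => 0). split. intros; ring. apply filterlim_const. Qed.

Lemma cd_id a x : cd a (fun t => t) 1 x.
Proof. exists (fun _ => 1). split. intros; ring. apply filterlim_const. Qed.

Lemma cd_plus a f g df dg x : cd a f df x -> cd a g dg x -> cd a (fun t => f t + g t) (df + dg) x.
Proof.
  intros [p [Hp1 Hp2]] [q [Hq1 Hq2]]. exists (fun t => p t + q t). split.
  intros t Ht. rewrite Rmult_plus_distr_r. rewrite <- Hp1, <- Hq1 by auto. ring.
  apply lim_plus; auto.
Qed.

Lemma cd_mult a f g df dg x : cd a f df x -> cd a g dg x -> cd a (fun t => f t * g t) (df * g x + f x * dg) x.
Proof.
  intros Hf Hg. assert (Hgc := cd_cont _ _ _ _ Hg).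
  destruct Hf as [p [Hp1 Hp2]], Hg as [q [Hq1 Hq2]].
  exists (fun t => p t * g t + f x * q t). split.
  intros t Ht. replace ((p t * g t + f x * q t) * (t - x)) with ((p t * (t - x)) * g t + f x * (q t * (t - x))) by ring.
  rewrite <- Hp1, <- Hq1 by auto. ring.
  apply lim_plus; auto. apply lim_mult; auto. apply lim_mult; auto. apply filterlim_const.
Qed.

Lemma cd_comp a phi f l df x : derivable_pt_lim phi (f x) l -> cd a f df x ->
  cd a (fun t => phi (f t)) (l * df) x.
Proof.
  intros Hphi Hf. assert (Hfc := cd_cont _ _ _ _ Hf).
  destruct (cara _ _ _ Hphi) as [chi [Hc1 Hc2]].
  destruct Hf as [p [Hp1 Hp2]].
  exists (fun t => chi (f t) * p t). split.
  intros t Ht. rewrite Hc1, Hp1 by auto. ring.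
  apply lim_mult; auto. apply (filterlim_comp _ _ _ f chi (W a x) (locally (f x))); auto.
Qed.

Lemma cd_ext a f g d x : (forall t, a <= t -> f t = g t) -> a <= x -> cd a f d x -> cd a g d x.
Proof.
  intros He Hx [p [Hp1 Hp2]]. exists p. split; auto.
  intros t Ht. rewrite <- !He by auto. auto.
Qed.

Lemma cd_d a f d d' x : d = d' -> cd a f d x -> cd a f d' x.
Proof. intros ->; auto. Qed.

Lemma mono a f d : (forall x, a <= x -> cd a f (d x) x) -> (forall x, a <= x -> 0 <= d x) ->
  forall u s, a <= u -> u <= s -> f u <= f s.
Proof.
  intros Hd Hp u s Hu Hus. destruct (Req_dec u s) as [->|Hne]; [lra|].
  assert (Hlt : u < s) by lra.
  assert (Hts : forall t, u < t < s -> f t <= f s).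
  { intros t Ht. destruct (MVT_cor2 f d t s) as [c [Hc1 Hc2]]. lra.
    intros c Hc. apply cd_interior with a. lra. apply Hd. lra.
    assert (0 <= d c) by (apply Hp; lra). nra. }
  assert (PF := Wgt_proper u).
  assert (Hl : filterlim f (within (fun t => u < t) (locally u)) (locally (f u))).
  { intros P HP. specialize (cd_cont _ _ _ _ (Hd u Hu) P HP). unfold filtermap, W, within.
    apply filter_imp. intros t H1 H2. apply H1. lra. }
  assert (Hr : filterlim (fun _ => f s) (within (fun t => u < t) (locally u)) (locally (f s))).
  { apply filterlim_const. }
  change (Rbar_le (f u) (f s)).
  apply (filterlim_le (F := within (fun t => u < t) (locally u)) f (fun _ => f s)); auto.
  unfold within. apply locR. exists (s - u). split. lra. intros y Hy Huy.
  apply Hts. apply Rabs_def2 in Hy. lra.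
Qed.

Lemma chain (Y h h1 H : R -> R) b u0 yd Hd :
  0 <= u0 -> (forall t, 0 <= t -> b <= Y t) ->
  (forall t1 t2, 0 <= t1 -> t1 < t2 -> Y t1 < Y t2) ->
  cd 0 Y yd u0 -> has_deriv_from b h h1 -> (forall t, 0 <= t -> h (Y t) = H t) ->
  cd 0 H Hd u0 -> h1 (Y u0) * yd = Hd.
Proof.
  intros Hu0 Hb Hmono HY Hh HHe HH.
  assert (HYc := cd_cont _ _ _ _ HY).
  assert (Hq := Hh (Y u0) (Hb u0 Hu0)).
  assert (HYl : filterlim Y (Wn 0 u0) (Wn b (Y u0))).
  { intros P HP. unfold Wn, within in HP. specialize (HYc _ HP).
    unfold filtermap, W, Wn, within in *. revert HYc. apply filter_imp.
    intros t H1 [H2 H3]. apply H1; auto. split. apply Hb; auto.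
    intros He. destruct (Rlt_or_le t u0).
    - assert (Y t < Y u0) by (apply Hmono; lra). lra.
    - assert (Y u0 < Y t) by (apply Hmono; lra). lra. }
  destruct HY as [p [Hp1 Hp2]]. destruct HH as [r [Hr1 Hr2]].
  assert (PF := Wn_proper 0 u0 Hu0).
  apply (filterlim_locally_unique (F := Wn 0 u0) r).
  - apply filterlim_ext_loc with (fun t => (h (Y t) - h (Y u0)) / (Y t - Y u0) * p t).
    + unfold Wn, within. apply filter_forall. intros t [Ht Hne].
      assert (HYne : Y t - Y u0 <> 0).
      { intros He. destruct (Rlt_or_le t u0).
        - assert (Y t < Y u0) by (apply Hmono; lra). lra.
        - assert (Y u0 < Y t) by (apply Hmono; lra). lra. }
      assert (Htu : t - u0 <> 0) by lra.
      rewrite !HHe in * by auto.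
      apply Rmult_eq_reg_r with (t - u0); auto.
      rewrite <- Hr1 by auto. rewrite Rmult_assoc, <- Hp1 by auto. field. auto.
    + apply lim_mult. apply within_filter, locally_filter.
      apply (filterlim_comp _ _ _ Y (fun z => (h z - h (Y u0)) / (z - Y u0)) _ (Wn b (Y u0))); auto.
      intros P HP. apply W_Wn. apply Hp2. exact HP.
  - intros P HP. apply W_Wn. apply Hr2. exact HP.
Qed.

Lemma ext_cont (phi : R -> R) : (forall x, 0 <= x -> filterlim phi (W 0 x) (locally (phi x))) ->
  forall x, continuous (fun s => phi (Rmax 0 s)) x.
Proof.
  intros H x. unfold continuous.
  apply (filterlim_comp _ _ _ (fun s => Rmax 0 s) phi _ (W 0 (Rmax 0 x))).
  2: apply H; apply Rmax_l.
  intros P HP. unfold W, within in HP. apply locR in HP. destruct HP as [e [He HP]].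
  unfold filtermap. apply locR. exists e. split; auto. intros y Hy. apply HP.
  2: apply Rmax_l. apply Rabs_def2 in Hy. apply Rabs_def1; unfold Rmax;
  destruct (Rle_dec 0 y), (Rle_dec 0 x); lra.
Qed.

Definition kt (g : R -> R) (s : R) := / exp (g (Rmax 0 s)).

Lemma kt_cont (g : R -> R) : (forall x, 0 <= x -> filterlim g (W 0 x) (locally (g x))) ->
  forall x, continuous (kt g) x.
Proof.
  intros H x. unfold kt.
  apply (continuous_comp (fun s => g (Rmax 0 s)) (fun z => / exp z)).
  apply ext_cont; auto.
  apply (ex_derive_continuous (K := R_AbsRing) (V := R_NormedModule) (fun z => / exp z)). auto_derive. apply Rgt_not_eq, exp_pos.
Qed.

Lemma kt_pos g s : 0 < kt g s.
Proof. unfold kt. apply Rinv_0_lt_compat, exp_pos. Qed.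

Lemma kt_ex (g : R -> R) : (forall x, 0 <= x -> filterlim g (W 0 x) (locally (g x))) ->
  forall a b, ex_RInt (kt g) a b.
Proof. intros H a b. apply (ex_RInt_continuous (V := R_CompleteNormedModule)). intros; apply kt_cont; auto. Qed.

Lemma mono_lim (I : R -> R) c M :
  (forall b1 b2, c <= b1 -> b1 <= b2 -> I b1 <= I b2) -> (forall b, c <= b -> I b <= M) ->
  exists l, filterlim I (Rbar_locally p_infty) (locally l) /\ (forall b, c <= b -> I b <= l).
Proof.
  intros Hm HM.
  set (E := fun y => exists b, c <= b /\ y = I b).
  assert (HB : bound E). { exists M. intros y [b [Hb ->]]. auto. }
  assert (HE : exists y, E y). { exists (I c). exists c. split; auto. lra. }
  destruct (completeness E HB HE) as [l [Hl1 Hl2]].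
  assert (Hub : forall b, c <= b -> I b <= l). { intros b Hb. apply Hl1. exists b; auto. }
  exists l. split; auto.
  intros P HP. apply locR in HP. destruct HP as [e [He HP]].
  assert (Hex : exists b0, c <= b0 /\ l - e < I b0).
  { apply Classical_Prop.NNPP. intros Hn.
    assert (l <= l - e). { apply Hl2. intros y [b [Hb ->]].
      apply Rnot_lt_le. intros Hlt. apply Hn. exists b. auto. } lra. }
  destruct Hex as [b0 [Hb0 Hlt]].
  exists b0. intros x Hx. apply HP. assert (I b0 <= I x) by (apply Hm; lra).
  assert (I x <= l) by (apply Hub; lra). apply Rabs_def1; lra.
Qed.

Lemma exp_int c p u b : 0 < p ->
  RInt (fun s => c * exp (- p * (s - u))) u b = c / p * (1 - exp (- p * (b - u))).
Proof.
  intros Hp. apply is_RInt_unique.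
  assert (H := is_RInt_derive (fun s => - (c / p) * exp (- p * (s - u))) (fun s => c * exp (- p * (s - u))) u b).
  replace (c / p * (1 - exp (- p * (b - u)))) with
    (minus (- (c / p) * exp (- p * (b - u))) (- (c / p) * exp (- p * (u - u)))).
  apply H.
  - intros x _. auto_derive. auto. replace (x + - u) with (x - u) by ring. field. lra.
  - intros x _. apply (ex_derive_continuous (K := R_AbsRing) (V := R_NormedModule) (fun s => c * exp (- p * (s - u)))). auto_derive. auto.
  - unfold minus, plus, opp. simpl. replace (u - u) with 0 by ring.
    replace (- p * 0) with 0 by ring. rewrite exp_0. field. lra.
Qed.

Lemma exp_le' x y : x <= y -> exp x <= exp y.
Proof. intros [H|H]. left; apply exp_increasing; auto. subst; lra. Qed.

Lemma gcont_of (g g1 : R -> R) : has_deriv_from 0 g g1 ->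
  forall x, 0 <= x -> filterlim g (W 0 x) (locally (g x)).
Proof. intros H x Hx. apply (cd_cont 0 g (g1 x)). apply hdf_cd; auto. Qed.

Lemma Ibound (g g1 : R -> R) (Hg1 : has_deriv_from 0 g g1)
  (Hpos1 : forall u, 0 <= u -> 0 < g1 u)
  (Hconv : forall u s, 0 <= u -> u <= s -> g u + g1 u * (s - u) <= g s) :
  forall u b, 0 <= u -> u <= b -> RInt (kt g) u b <= / exp (g u) / g1 u.
Proof.
  intros u b Hu Hb. assert (Hc := gcont_of g g1 Hg1).
  assert (Hp := Hpos1 u Hu).
  apply Rle_trans with (RInt (fun s => / exp (g u) * exp (- g1 u * (s - u))) u b).
  - apply RInt_le; auto. apply kt_ex; auto.
    apply (ex_RInt_continuous (V := R_CompleteNormedModule)). intros z _.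
    apply (ex_derive_continuous (K := R_AbsRing) (V := R_NormedModule) (fun s => / exp (g u) * exp (- g1 u * (s - u)))).
    auto_derive. auto.
    intros s Hs. unfold kt. rewrite Rmax_right by lra.
    rewrite <- exp_Ropp, <- exp_Ropp, <- exp_plus. apply exp_le'.
    assert (H := Hconv u s Hu ltac:(lra)). lra.
  - rewrite exp_int by auto. assert (0 < exp (- g1 u * (b - u))) by apply exp_pos.
    assert (0 < / exp (g u)) by (apply Rinv_0_lt_compat, exp_pos).
    unfold Rdiv. assert (0 < / g1 u) by (apply Rinv_0_lt_compat; auto).
    assert (0 < / exp (g u) * / g1 u) by (apply Rmult_lt_0_compat; auto). nra.
Qed.

Lemma I_mono (g g1 : R -> R) (Hg1 : has_deriv_from 0 g g1) :
  forall u b1 b2, u <= b1 -> b1 <= b2 -> RInt (kt g) u b1 <= RInt (kt g) u b2.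
Proof.
  intros u b1 b2 H1 H2. assert (Hc := gcont_of g g1 Hg1).
  rewrite <- (RInt_Chasles (V := R_CompleteNormedModule) (kt g) u b1 b2) by (apply kt_ex; auto).
  assert (0 <= RInt (kt g) b1 b2).
  { apply RInt_ge_0; auto. apply kt_ex; auto. intros; left; apply kt_pos. }
  unfold plus; simpl. lra.
Qed.

Lemma F_rep (g g1 : R -> R) (Hg1 : has_deriv_from 0 g g1)
  (Hpos1 : forall u, 0 <= u -> 0 < g1 u)
  (Hconv : forall u s, 0 <= u -> u <= s -> g u + g1 u * (s - u) <= g s) :
  exists L0, (forall b, 0 <= b -> RInt (kt g) 0 b <= L0) /\
   forall u, 0 <= u -> F_of g u = L0 - RInt (kt g) 0 u /\
     filterlim (fun b => RInt (kt g) u b) (Rbar_locally p_infty) (locally (F_of g u)).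
Proof.
  assert (Hc := gcont_of g g1 Hg1).
  destruct (mono_lim (RInt (kt g) 0) 0 (/ exp (g 0) / g1 0)) as [L0 [HL1 HL2]].
  - intros; apply (I_mono g g1); auto.
  - intros; apply (Ibound g g1); auto; lra.
  - exists L0. split; auto. intros u Hu.
    assert (Hlim : filterlim (fun b => RInt (kt g) u b) (Rbar_locally p_infty) (locally (L0 - RInt (kt g) 0 u))).
    { apply filterlim_ext with (fun b => RInt (kt g) 0 b + (- RInt (kt g) 0 u)).
      - intros b. rewrite <- (RInt_Chasles (V := R_CompleteNormedModule) (kt g) 0 u b) by (apply kt_ex; auto).
        unfold plus; simpl. ring.
      - apply lim_plus. apply Rbar_locally_filter. exact HL1. apply filterlim_const. }
    assert (HF : F_of g u = L0 - RInt (kt g) 0 u).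
    { unfold F_of. apply is_RInt_gen_unique.
      intros P HP. specialize (Hlim P HP). destruct Hlim as [M HM].
      unfold filtermapi.
      apply Filter_prod with (fun a => a = u) (fun b => Rmax M u < b).
      - reflexivity.
      - exists (Rmax M u). auto.
      - intros a b -> Hb. simpl. exists (RInt (kt g) u b). split.
        + apply is_RInt_ext with (kt g).
          * intros x Hx. rewrite Rmin_left, Rmax_right in Hx by (assert (Hm := Rmax_r M u); lra).
            unfold kt, f_of. rewrite Rmax_right by lra. reflexivity.
          * apply (RInt_correct (V := R_CompleteNormedModule)). apply kt_ex; auto.
        + apply HM. assert (Hm := Rmax_l M u). lra. }
    split; auto. rewrite HF. auto.
Qed.

Lemma conv (g g1 g2 : R -> R) (Hg1 : has_deriv_from 0 g g1) (Hg2 : has_deriv_from 0 g1 g2)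
  (Hpos2 : forall u, 0 <= u -> 0 < g2 u) :
  forall u s, 0 <= u -> u <= s -> g u + g1 u * (s - u) <= g s.
Proof.
  intros u s Hu Hs.
  assert (Hm1 : forall x y, 0 <= x -> x <= y -> g1 x <= g1 y).
  { apply (mono 0 g1 g2). intros; apply hdf_cd; auto. intros; left; apply Hpos2; auto. }
  assert (H := mono u (fun s => g s + (- g1 u) * s) (fun s => g1 s - g1 u)).
  assert (H' : (fun s => g s + (- g1 u) * s) u <= (fun s => g s + (- g1 u) * s) s).
  { apply H; auto; try lra.
    - intros x Hx. eapply cd_d; [ | apply cd_plus; [apply cd_restrict with 0; [lra|lra|apply hdf_cd; [exact Hg1|lra]] | apply cd_mult; [apply cd_const|apply cd_id]]].
      simpl; ring.
    - intros x Hx. assert (g1 u <= g1 x) by (apply Hm1; lra). lra. }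
  simpl in H'. lra.
Qed.

Lemma F_props (g g1 g2 : R -> R) (Hg1 : has_deriv_from 0 g g1) (Hg2 : has_deriv_from 0 g1 g2)
  (Hpos1 : forall u, 0 <= u -> 0 < g1 u) (Hpos2 : forall u, 0 <= u -> 0 < g2 u) :
  (forall u, 0 <= u -> 0 < F_of g u) /\
  (forall u, 0 <= u -> F_of g u * g1 u * exp (g u) <= 1) /\
  (forall u t, 0 <= u -> u < t -> F_of g t < F_of g u) /\
  (forall u, 0 <= u -> cd 0 (F_of g) (- / exp (g u)) u).
Proof.
  assert (Hconv := conv g g1 g2 Hg1 Hg2 Hpos2).
  assert (Hc := gcont_of g g1 Hg1).
  destruct (F_rep g g1 Hg1 Hpos1 Hconv) as [L0 [HL HF]].
  assert (Hch : forall a b c, RInt (kt g) a b + RInt (kt g) b c = RInt (kt g) a c).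
  { intros. apply (RInt_Chasles (V := R_CompleteNormedModule)); apply kt_ex; auto. }
  assert (Hgt : forall a b, a < b -> 0 < RInt (kt g) a b).
  { intros a b Hab. apply RInt_gt_0; auto. intros; apply kt_pos. intros; apply kt_cont; auto. }
  split; [|split; [|split]].
  - intros u Hu. destruct (HF u Hu) as [-> _].
    assert (H1 := HL (u + 1) ltac:(lra)). rewrite <- (Hch 0 u (u + 1)) in H1.
    assert (H2 := Hgt u (u + 1) ltac:(lra)). lra.
  - intros u Hu. destruct (HF u Hu) as [_ Hl].
    assert (Hle : F_of g u <= / exp (g u) / g1 u).
    { change (Rbar_le (F_of g u) (/ exp (g u) / g1 u)).
      apply (filterlim_le (F := Rbar_locally p_infty) (fun b => RInt (kt g) u b) (fun _ => / exp (g u) / g1 u)); auto.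
      exists u. intros b Hb. apply (Ibound g g1); auto; lra.
      apply filterlim_const. }
    assert (Hp := Hpos1 u Hu). assert (He := exp_pos (g u)).
    assert (Hle2 : F_of g u * g1 u <= / exp (g u)).
    { apply Rmult_le_reg_r with (/ g1 u). apply Rinv_0_lt_compat; auto.
      replace (F_of g u * g1 u * / g1 u) with (F_of g u) by (field; lra). exact Hle. }
    apply Rmult_le_reg_r with (/ exp (g u)). apply Rinv_0_lt_compat; auto.
    replace (F_of g u * g1 u * exp (g u) * / exp (g u)) with (F_of g u * g1 u) by (field; lra).
    lra.
  - intros u t Hu Hut. destruct (HF u Hu) as [-> _]. destruct (HF t ltac:(lra)) as [-> _].
    rewrite <- (Hch 0 u t). assert (H2 := Hgt u t Hut). lra.
  - intros u Hu. apply cd_ext with (fun v => L0 - RInt (kt g) 0 v); auto.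
    intros t Ht. destruct (HF t Ht) as [-> _]. auto.
    apply cd_of_dpl.
    replace (- / exp (g u)) with (0 - kt g u) by (unfold kt; rewrite Rmax_right by lra; ring).
    apply (derivable_pt_lim_minus (fun _ => L0) (RInt (kt g) 0)).
    apply derivable_pt_lim_const.
    apply is_derive_Reals. apply (is_derive_RInt (V := R_NormedModule) (kt g) (RInt (kt g) 0) 0 u).
    apply filter_forall. intros b. apply (RInt_correct (V := R_CompleteNormedModule)). apply kt_ex; auto.
    apply kt_cont; auto.
Qed.
Lemma alg p q r x : 0 < p -> 0 < q -> 0 <= p^2 - q -> 0 < 2*q^2 - p*r -> 0 < x -> p*x <= 1 ->
  p - (q + p^2) * x < 0 -> 0 <= -(r + 4*p*q + 2*p^3) * x^2 + 7*(q+p^2)*x - 5*p.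
Proof.
  intros Hp Hq H1 H2 Hx Hpx Hn.
  set (Q := -(r + 4*p*q + 2*p^3) * x^2 + 7*(q+p^2)*x - 5*p).
  assert (HD : 0 < q + p^2) by nra.
  assert (Hx0 : 0 < (q + p^2) * x - p) by lra.
  destruct (Rle_or_lt 0 (r + 4*p*q + 2*p^3)) as [Ha|Ha].
  - assert (E : p * (q + p^2) * q * Q = p^2 * (2*q^2 - p*r) * (1 - p*x)
       + (q + p^2) * (3*p*q - r) * ((q + p^2) * x - p)
       + q * (r + 4*p*q + 2*p^3) * ((q + p^2) * x - p) * (1 - p*x)) by (unfold Q; ring).
    assert (Q1 : 0 < 3*p*q - r).
    { assert (p * r < 2 * q^2) by lra. assert (p * (3*p*q - r) > 0) by nra. nra. }
    assert (T1 : 0 <= p^2 * (2*q^2 - p*r) * (1 - p*x)).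
    { apply Rmult_le_pos; [|lra]. apply Rmult_le_pos; nra. }
    assert (T2 : 0 <= (q + p^2) * (3*p*q - r) * ((q + p^2) * x - p)).
    { apply Rmult_le_pos; [|lra]. apply Rmult_le_pos; nra. }
    assert (T3 : 0 <= q * (r + 4*p*q + 2*p^3) * ((q + p^2) * x - p) * (1 - p*x)).
    { apply Rmult_le_pos; [|lra]. apply Rmult_le_pos; [|lra]. apply Rmult_le_pos; lra. }
    assert (Hpos : 0 < p * (q + p^2) * q) by (apply Rmult_lt_0_compat; [apply Rmult_lt_0_compat|]; lra).
    destruct (Rle_or_lt 0 Q); auto. nra.
  - assert (E : (q + p^2)^2 * Q = p * (2*q^2 - p*r) +
       ((q + p^2) * x - p) * (- (r + 4*p*q + 2*p^3) * ((q + p^2) * x + p) + 7 * (q + p^2)^2)) by (unfold Q; ring).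
    assert (T : 0 <= ((q + p^2) * x - p) * (- (r + 4*p*q + 2*p^3) * ((q + p^2) * x + p) + 7 * (q + p^2)^2)).
    { apply Rmult_le_pos; [lra|]. assert (0 < (q + p^2) * x + p) by lra. nra. }
    assert (0 < (q + p^2)^2) by nra.
    destruct (Rle_or_lt 0 Q); auto. nra.
Qed.

Theorem lemma3p4 (g g1 g2 g3 f1 eta h h1 h2 : R -> R)
  (* g in C^3[0,oo) with g' = g1, g'' = g2, g''' = g3 *)
  (Hg1 : has_deriv_from 0 g g1)
  (Hg2 : has_deriv_from 0 g1 g2)
  (Hg3 : has_deriv_from 0 g2 g3)
  (Hg3c : cont_from 0 g3)
  (Hpos1 : forall u, 0 <= u -> 0 < g1 u)
  (Hpos2 : forall u, 0 <= u -> 0 < g2 u)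
  (Hc1 : forall u, 0 <= u -> 0 <= g1 u ^ 2 - g2 u)
  (Hc2 : forall u, 0 <= u -> 0 < 2 * g2 u ^ 2 - g1 u * g3 u)
  (* f1 = f' where f = e^g *)
  (Hf1 : has_deriv_from 0 (f_of g) f1)
  (* eta(y) = F^{-1}(e^{-y}) for y >= -log F(0) *)
  (Heta : forall y, - ln (F_of g 0) <= y ->
            0 <= eta y /\ F_of g (eta y) = exp (- y))
  (* h(y) = 1 - f'(eta y) F(eta y) *)
  (Hh : forall y, - ln (F_of g 0) <= y ->
          h y = 1 - f1 (eta y) * F_of g (eta y))
  (* h1 = h', h2 = h'' on [-log F(0), oo) *)
  (Hh1 : has_deriv_from (- ln (F_of g 0)) h h1)
  (Hh2 : has_deriv_from (- ln (F_of g 0)) h1 h2)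
  (* standing hypothesis: h' < 0 *)
  (Hneg : forall y, - ln (F_of g 0) <= y -> h1 y < 0) :
  forall y, - ln (F_of g 0) <= y -> h2 y / h1 y <= 4.
Proof.
  intros y Hy.
  destruct (F_props g g1 g2 Hg1 Hg2 Hpos1 Hpos2) as [Fpos [Fb [Fdec Fcd]]].
  set (b := - ln (F_of g 0)) in *.
  pose (Y := fun t => - ln (F_of g t)).
  pose (phi := fun t => exp (g t) * F_of g t).
  pose (Hd := fun t => g1 t - (g2 t + g1 t ^ 2) * phi t).
  pose (K := fun t => phi t * Hd t).
  pose (Kd := fun u => (g1 u * phi u - 1) * Hd u + phi u * (g2 u - (g3 u + 2 * g1 u * g2 u) * phi u - (g2 u + g1 u ^ 2) * (g1 u * phi u - 1))).
  assert (Ymono : forall t1 t2, 0 <= t1 -> t1 < t2 -> Y t1 < Y t2).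
  { intros t1 t2 H1 H2. unfold Y. assert (F_of g t2 < F_of g t1) by (apply Fdec; auto).
    assert (ln (F_of g t2) < ln (F_of g t1)). apply ln_increasing; auto. apply Fpos; lra. lra. }
  assert (Yb : forall t, 0 <= t -> b <= Y t).
  { intros t Ht. destruct (Req_dec t 0) as [->|Hne]. unfold Y, b; lra.
    left. apply (Ymono 0 t); lra. }
  assert (expg : forall u, 0 <= u -> cd 0 (fun t => exp (g t)) (exp (g u) * g1 u) u).
  { intros u Hu. apply cd_comp. apply derivable_pt_lim_exp. apply hdf_cd; auto. }
  assert (Ycd : forall u, 0 <= u -> cd 0 Y (/ F_of g u * / exp (g u)) u).
  { intros u Hu. apply cd_ext with (fun t => (fun _ => -1) t * (fun t => ln (F_of g t)) t); auto.
    intros t _. unfold Y. ring.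
    eapply cd_d; [|apply cd_mult; [apply cd_const | apply cd_comp; [apply derivable_pt_lim_ln; apply Fpos; auto | apply Fcd; auto]]].
    cbv beta. ring. }
  assert (etaY : forall t, 0 <= t -> eta (Y t) = t).
  { intros t Ht. destruct (Heta (Y t) (Yb t Ht)) as [He1 He2].
    assert (E : exp (- Y t) = F_of g t).
    { unfold Y. rewrite Ropp_involutive, exp_ln. auto. apply Fpos; auto. }
    rewrite E in He2.
    destruct (Rtotal_order (eta (Y t)) t) as [Hl|[He|Hl]]; auto.
    - assert (F_of g t < F_of g (eta (Y t))) by (apply Fdec; auto). lra.
    - assert (F_of g (eta (Y t)) < F_of g t) by (apply Fdec; auto). lra. }
  assert (f1e : forall t, 0 <= t -> f1 t = exp (g t) * g1 t).
  { intros t Ht. apply (cd_unique 0 (f_of g) f1 t); auto.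
    }
  assert (hH : forall t, 0 <= t -> h (Y t) = 1 - g1 t * phi t).
  { intros t Ht. rewrite Hh by (apply Yb; auto). rewrite etaY, f1e by auto. unfold phi. ring. }
  assert (phicd : forall u, 0 <= u -> cd 0 phi (g1 u * phi u - 1) u).
  { intros u Hu. eapply cd_d; [|apply cd_mult; [apply expg; auto | apply Fcd; auto]].
    cbv beta. unfold phi. field. apply Rgt_not_eq, exp_pos. }
  assert (Hcd : forall u, 0 <= u -> cd 0 (fun t => 1 - g1 t * phi t) (Hd u) u).
  { intros u Hu.
    apply cd_ext with (fun t => (fun _ => 1) t + (fun _ => -1) t * (fun t => g1 t * phi t) t); auto.
    intros; simpl; ring.
    eapply cd_d; [|apply cd_plus; [apply cd_const | apply cd_mult; [apply cd_const | apply cd_mult; [apply (hdf_cd 0 g1 g2); auto | apply phicd; auto]]]].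
    unfold Hd. cbv beta. ring. }
  assert (chain1 : forall u, 0 <= u -> h1 (Y u) = K u).
  { intros u Hu.
    assert (E := chain Y h h1 (fun t => 1 - g1 t * phi t) b u _ _ Hu Yb Ymono (Ycd u Hu) Hh1 hH (Hcd u Hu)).
    unfold K, phi. rewrite <- E. field. split. apply Rgt_not_eq, exp_pos. apply Rgt_not_eq, Fpos; auto. }
  assert (Kcd : forall u, 0 <= u -> cd 0 K (Kd u) u).
  { intros u Hu.
    apply cd_ext with (fun t => phi t * ((fun t => g1 t) t + (fun _ => -1) t * ((fun t => g2 t + g1 t * g1 t) t * phi t))); auto.
    intros; unfold K, Hd; simpl; ring.
    eapply cd_d; [|apply cd_mult; [apply phicd; auto | apply cd_plus; [apply (hdf_cd 0 g1 g2); auto | apply cd_mult; [apply cd_const | apply cd_mult; [apply cd_plus; [apply (hdf_cd 0 g2 g3); auto | apply cd_mult; apply (hdf_cd 0 g1 g2); auto] | apply phicd; auto]]]]].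
    unfold Kd, Hd. cbv beta. ring. }
  destruct (Heta y Hy) as [Hu0 HFu0].
  set (u0 := eta y) in *.
  assert (HYu0 : Y u0 = y). { unfold Y. rewrite HFu0, ln_exp. ring. }
  assert (chain2 := chain Y h1 h2 K b u0 _ _ Hu0 Yb Ymono (Ycd u0 Hu0) Hh2 chain1 (Kcd u0 Hu0)).
  rewrite <- HYu0. rewrite chain1 by auto.
  assert (Hphi : 0 < phi u0). { unfold phi. apply Rmult_lt_0_compat. apply exp_pos. apply Fpos; auto. }
  assert (Hh2e : h2 (Y u0) = Kd u0 * phi u0).
  { rewrite <- chain2. unfold phi. field. split. apply Rgt_not_eq, exp_pos. apply Rgt_not_eq, Fpos; auto. }
  rewrite Hh2e.
  assert (HKneg : K u0 < 0). { rewrite <- chain1 by auto. apply Hneg. rewrite HYu0. auto. }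
  assert (HdN : Hd u0 < 0). { unfold K in HKneg. nra. }
  assert (Hpx : g1 u0 * phi u0 <= 1). { unfold phi. assert (H := Fb u0 Hu0). lra. }
  assert (HQ := alg (g1 u0) (g2 u0) (g3 u0) (phi u0) (Hpos1 u0 Hu0) (Hpos2 u0 Hu0) (Hc1 u0 Hu0) (Hc2 u0 Hu0) Hphi Hpx HdN).
  assert (Eq : Kd u0 - 4 * Hd u0 = -(g3 u0 + 4*g1 u0*g2 u0 + 2*g1 u0^3) * phi u0^2 + 7*(g2 u0+g1 u0^2)*phi u0 - 5*g1 u0).
  { unfold Kd, Hd. ring. }
  unfold K.
  replace (Kd u0 * phi u0 / (phi u0 * Hd u0)) with (4 - (Kd u0 - 4 * Hd u0) * / (- Hd u0)) by (field; lra).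
  assert (0 <= (Kd u0 - 4 * Hd u0) * / (- Hd u0)).
  { apply Rmult_le_pos. lra. left. apply Rinv_0_lt_compat. lra. }
  lra.
Qed.
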